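(* Let $\kappa\ge 0$. Suppose $\bar{\mathbf x}\in\mathbf X$ satisfies $$\sum_{a\in\mathcal A}\sum_{w\in\mathcal W}\bar\lambda^w_a\, t_a(\bar{\mathbf v})\,(x^w_a-\bar x^w_a)\ \ge\ 0\qquad\text{for all }\mathbf x\in\mathbf X,$$ where $\bar v_a=\sum_{w\in\mathcal W}\bar x^w_a$, for some constants $\bar\lambda^w_a\in[\tfrac{1}{1+\kappa},1]$ ($w\in\mathcal W$, $a\in\mathcal A$). Then every path flow $\bar{\mathbf f}\in\mathbf F$ with $\bar x^w_a=\sum_{p\in\mathcal P_w}\delta^p_a\bar f_p$ for all $a\in\mathcal A$, $w\in\mathcal W$ is a $\kappa$-multiplicative satisficing user equilibrium ($\kappa$-MSatUE).
   Context: Let $G=(\mathcal N,\mathcal A)$ be a finite directed graph and $\mathcal W$ a finite set of origin–destination (OD) pairs; each $w\in\mathcal W$ has a demand $Q_w>0$ and a finite set $\mathcal P_w$ of paths from its origin to its destination; $\mathcal P=\bigcup_{w}\mathcal P_w$. Let $\delta^p_a=1$ if arc $a$ lies on path $p$ and $0$ otherwise. The feasible path flows are $\mathbf F=\{\mathbf f\ge 0:\sum_{p\in\mathcal P_w}f_p=Q_w\ \forall w\in\mathcal W\}$. A path flow $\mathbf f$ determines arc flows $v_a=\sum_{p\in\mathcal P}\delta^p_af_p$ (the set of these is $\mathbf V$) and OD-specific arc flows $x^w_a=\sum_{p\in\mathcal P_w}\delta^p_af_p$ (the set of these is $\mathbf X$); note $v_a=\sum_w x^w_a$. Each arc $a$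 has a travel time function $t_a(\mathbf v)$ of the arc-flow vector. The path travel time is $c_p(\mathbf f)=\sum_{a\in\mathcal A}\delta^p_a t_a(\mathbf v)$, where $\mathbf v$ is the arc flow induced by $\mathbf f$. For $\kappa\ge0$, a flow $\mathbf f\in\mathbf F$ is a $\kappa$-MSatUE if for every $w\in\mathcal W$ and $p\in\mathcal P_w$: $f_p>0\implies c_p(\mathbf f)\le(1+\kappa)\min_{p'\in\mathcal P_w}c_{p'}(\mathbf f)$. *)

(* Defs.v *)
From mathcomp Require Import all_boot all_order all_algebra.
From mathcomp Require Import reals.
Set Implicit Arguments. Unset Strict Implicit. Unset Printing Implicit Defensive.
Import Order.TTheory GRing.Theory Num.Theory.
Local Open Scope ring_scope.

(* Network data:
   A : finite set of arcs, W : finite set of OD pairs, P : finite set of all paths,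
   od p : the OD pair w with p \in P_w (the P_w partition P),
   delta p a : arc a lies on path p  (delta^p_a = (delta p a)%:R),
   Q w : demand, t v a : travel time of arc a under arc-flow vector v. *)

Definition feasible (R : realType) (W P : finType) (od : P -> W) (Q : W -> R)
  (f : P -> R) : Prop :=
  (forall p, 0 <= f p) /\ (forall w, \sum_(p | od p == w) f p = Q w).

Definition arc_flow (R : realType) (A P : finType) (delta : P -> A -> bool)
  (f : P -> R) (a : A) : R :=
  \sum_(p : P) (delta p a)%:R * f p.

Definition od_arc_flow (R : realType) (A W P : finType) (od : P -> W)
  (delta : P -> A -> bool) (f : P -> R) (w : W) (a : A) : R :=
  \sum_(p : P | od p == w) (delta p a)%:R * f p.

Definition in_X (R : realType) (A W P : finType) (od : P -> W)
  (delta : P -> A -> bool) (Q : W -> R) (x : W -> A -> R) : Prop :=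
  exists f : P -> R, feasible od Q f /\
    (forall w a, x w a = od_arc_flow od delta f w a).

Definition path_cost (R : realType) (A P : finType) (delta : P -> A -> bool)
  (t : (A -> R) -> A -> R) (f : P -> R) (p : P) : R :=
  \sum_(a : A) (delta p a)%:R * t (arc_flow delta f) a.

(* kappa-MSatUE: f \in F and for every w, p \in P_w with f_p > 0,
   c_p(f) <= (1+kappa) * min_{p' \in P_w} c_{p'}(f)
   (the minimum over the finite nonempty set P_w, written out as a bound
   against every p' \in P_w). *)
Definition MSatUE (R : realType) (A W P : finType) (od : P -> W)
  (delta : P -> A -> bool) (Q : W -> R) (t : (A -> R) -> A -> R)
  (kappa : R) (f : P -> R) : Prop :=
  feasible od Q f /\
  forall p : P, 0 < f p ->
    forall p' : P, od p' = od p ->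
      path_cost delta t f p <= (1 + kappa) * path_cost delta t f p'.

(* Main.v *)
Require Import Defs.
From mathcomp Require Import all_boot all_order all_algebra.
From mathcomp Require Import reals.
From mathcomp Require Import ring lra.
From Stdlib Require Import FunctionalExtensionality.
Import Order.TTheory GRing.Theory Num.Theory.
Local Open Scope ring_scope.

Lemma sum_ind (R : realType) (S : finType) (Pr : pred S) (r : S) (g : S -> R) :
  \sum_(q | Pr q) (q == r)%:R * g q = (Pr r)%:R * g r.
Proof.
rewrite big_mkcond (bigD1 r) //= eqxx mul1r big1 ?addr0.
  by case: (Pr r); rewrite ?mul1r ?mul0r.
by move=> q /negbTE ->; case: (Pr q); rewrite ?mul0r.
Qed.

Theorem lemma1 (R : realType) (A W P : finType) (od : P -> W)
  (delta : P -> A -> bool) (Q : W -> R) (t : (A -> R) -> A -> R)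
  (kappa : R)
  (hQ : forall w, 0 < Q w)
  (ht : forall (v : A -> R) (a : A), 0 <= t v a)
  (hkappa : 0 <= kappa)
  (xbar : W -> A -> R) (lambda : W -> A -> R)
  (hxbar : in_X od delta Q xbar)
  (hlambda : forall w a, (1 + kappa)^-1 <= lambda w a /\ lambda w a <= 1)
  (hVI : forall x : W -> A -> R, in_X od delta Q x ->
     0 <= \sum_(a : A) \sum_(w : W)
            lambda w a * t (fun a' => \sum_(w' : W) xbar w' a') a
              * (x w a - xbar w a))
  (fbar : P -> R)
  (hfbar : feasible od Q fbar)
  (hfx : forall (a : A) (w : W), xbar w a = od_arc_flow od delta fbar w a) :
  MSatUE od delta Q t kappa fbar.
Proof.
split => // p hp p' hod.
have hk1 : 0 < 1 + kappa by rewrite ltr_wpDr.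
have Hv : (fun a' => \sum_(w' : W) xbar w' a') = arc_flow delta fbar.
  apply: functional_extensionality => a.
  rewrite /arc_flow.
  under eq_bigr do rewrite hfx /od_arc_flow big_mkcond.
  rewrite exchange_big /=; apply: eq_bigr => q _.
  rewrite (bigD1 (od q)) //= eqxx big1 ?addr0 // => w /negbTE.
  by rewrite eq_sym => ->.
rewrite Hv in hVI.
set T := t (arc_flow delta fbar).
have cge0 : forall q, 0 <= path_cost delta t fbar q.
  move=> q; apply: sumr_ge0 => a _; apply: mulr_ge0 => //; exact: ht.
have [->|pp'] := eqVneq p p'.
  rewrite ler_peMl // ?lerDl //; exact: cge0.
pose d q : R := (q == p')%:R - (q == p)%:R.
pose f' q := fbar q + d q * fbar p.
have hf' : in_X od delta Q (od_arc_flow od delta f').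
  exists f'; split => //; split.
    move=> q; rewrite /f' /d.
    have [->|qp'] := eqVneq q p'.
      rewrite eq_sym (negbTE pp') subr0 mul1r addr_ge0 //; [exact: hfbar.1|exact: ltW].
    have [->|qp] := eqVneq q p.
      by rewrite ?(negbTE pp') sub0r mulN1r subrr.
    rewrite subrr mul0r addr0; exact: hfbar.1.
  move=> w; rewrite /f' big_split /= hfbar.2 -mulr_suml /d sumrB.
  have e1 : \sum_(q | od q == w) (q == p')%:R = (od p' == w)%:R :> R.
    by rewrite -[RHS]mulr1 -(@sum_ind R P (fun q => od q == w) p' (fun _ => 1)); under [RHS]eq_bigr do rewrite mulr1.
  have e2 : \sum_(q | od q == w) (q == p)%:R = (od p == w)%:R :> R.
    by rewrite -[RHS]mulr1 -(@sum_ind R P (fun q => od q == w) p (fun _ => 1)); under [RHS]eq_bigr do rewrite mulr1.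
  by rewrite e1 e2 hod subrr mul0r addr0.
have Hdiff : forall w a, od_arc_flow od delta f' w a - xbar w a =
   (w == od p)%:R * (((delta p' a)%:R - (delta p a)%:R) * fbar p).
  move=> w a; rewrite hfx /od_arc_flow -sumrB.
  under eq_bigr do rewrite /f' mulrDr addrAC subrr add0r /d mulrBl mulrBr
     !(mulrCA (delta _ a)%:R).
  rewrite sumrB !(@sum_ind R P) /= hod (eq_sym (od p) w); ring.
have H := hVI _ hf'.
have E : \sum_a \sum_w lambda w a * T a * (od_arc_flow od delta f' w a - xbar w a)
   = (\sum_a ((delta p' a)%:R - (delta p a)%:R) * (lambda (od p) a * T a)) * fbar p.
  rewrite mulr_suml; apply: eq_bigr => a _.
  under eq_bigr => w _ do rewrite Hdiff mulrC -mulrA.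
  rewrite (@sum_ind R W xpredT) /= mul1r; ring.
rewrite E in H.
have H2 : \sum_a (delta p a)%:R * (lambda (od p) a * T a) <=
          \sum_a (delta p' a)%:R * (lambda (od p) a * T a).
  rewrite -subr_ge0 -sumrB.
  rewrite pmulr_lge0 // in H.
  by under eq_bigr do rewrite -mulrBl.
rewrite /path_cost -/T.
apply: (le_trans (y := (1 + kappa) * \sum_a (delta p a)%:R * (lambda (od p) a * T a))).
  rewrite mulr_sumr; apply: ler_sum => a _.
  have [hl1 hl2] := hlambda (od p) a.
  have hl : 1 <= (1 + kappa) * lambda (od p) a.
    by rewrite -[X in X <= _](mulfV (lt0r_neq0 hk1)); apply: ler_wpM2l => //; exact: ltW.
  have hdt : 0 <= (delta p a)%:R * T a by apply: mulr_ge0 => //; exact: ht.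
  nra.
apply: (le_trans (ler_wpM2l (ltW hk1) H2)).
rewrite ler_pM2l //; apply: ler_sum => a _.
have [hl1 hl2] := hlambda (od p) a.
have hdt : 0 <= (delta p' a)%:R * T a by apply: mulr_ge0 => //; exact: ht.
nra.
Qed.
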